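(* Under the time evolution $T_\infty$, the basic solitons are exactly: (1) the words $F_k=F F\cdots F$ ($k$ letters, $k\ge1$), which are solitons of speed $k$ (called fast solitons); (2) the nonempty words in the letters $F$, $B_a$, $U_a$ ($a\geq1$) which contain neither $FF$ nor $FU_a$ (for any $a$) as a pair of consecutive letters; these are solitons of speed $1$ (called slow solitons).
   Context: Box-basket-ball system (BBBS). A site state is a triple $(a,b,c)$ of nonnegative integers with $a=b-c+1$ (one box, $b$ baskets, $c$ balls; each box/basket holds at most one ball, balls placed in the box first). Write $V=(1,0,0)$, $F=(0,0,1)$, $B_a=(a+1,a,0)$, $U_a=(a,a,1)$ for $a\ge1$. A state is a sequence $(S_i)_{i\in\mathbb Z}$ of site states with $S_i=V$ for all but finitely many $i$. The time evolution $T_\infty$: first every empty basket (there are $\min(a_i,b_i)$ at site $i$) is moved from site $i$ to site $i+1$, full baskets staying; then the balls are taken one at a time from left to right, and each is moved to the nearest currently unoccupied box or basket at a site strictly to its right (each ball moves exactly once). Solitons: for a finite word $A=A_1\cdots A_n$ of site states and $p\in\mathbb Z$, ''$A$ at $p$'' is the state with $S_{p+j-1}=A_j$ for $1\le j\le n$ and $S_i=V$ otherwise. A word $A$ with $A_1\ne V\ne A_n$ is a soliton of speed $v\ge1$ (for a time evolution $T$) if $T$ maps $A$ at $p$ to $A$ at $p+v$ for all $p$. A soliton $A$ of speed $v$ is basic if it cannot be written as $A=A'V^jA''$ with $A',A''$ nonempty solitons and $j\ge v$. *)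

(* Defs.v *)
From HB Require Import structures.
From mathcomp Require Import all_boot all_order all_algebra.
Set Implicit Arguments. Unset Strict Implicit. Unset Printing Implicit Defensive.
Import Order.TTheory GRing.Theory Num.Theory.

Definition site := (nat * nat * nat)%type.
Definition sa (s : site) : nat := s.1.1.
Definition sb (s : site) : nat := s.1.2.
Definition sc (s : site) : nat := s.2.
Definition wf_site (s : site) : bool := sa s + sc s == sb s + 1.

Definition V : site := (1, 0, 0).
Definition F : site := (0, 0, 1).
Definition B (a : nat) : site := (a.+1, a, 0).
Definition U (a : nat) : site := (a, a, 1).

Definition at_ (A : seq site) (p : int) : int -> site :=
  fun i => if ((p <= i)%R && (i < p + (size A)%:Z)%R) then nth V A (absz (i - p)%R)
           else V.

(** Step 1 of T_infty: every empty basket (min(a,b) of them at a site) moves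
    one site to the right; full baskets, boxes and balls stay. *)
Fixpoint basket_move (prev : nat) (w : seq site) : seq (nat * nat) :=
  match w with
  | [::] => [::]
  | s :: w' => let e := minn (sa s) (sb s) in (sb s - e + prev, sc s) :: basket_move e w'
  end.

(** Step 2: one ball at site j moves to the nearest site k > j having a
    currently unoccupied container (occupancy < capacity = 1 box + baskets). *)
Definition move_one (cap : seq nat) (j : nat) (occ : seq nat) : seq nat :=
  let k := j.+1 + find (fun k => nth 0 occ k < nth 0 cap k) (iota j.+1 (size cap - j.+1)) in
  set_nth 0 (set_nth 0 occ k (nth 0 occ k).+1) j (nth 0 occ j).-1.

(** Balls are taken one at a time from left to right; each original ball
    moves exactly once. *)
Definition move_balls (orig cap : seq nat) : seq nat :=
  foldl (fun occ j => iter (nth 0 orig j) (move_one cap j) occ) orig (iota 0 (size orig)).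

(** T_infty applied to the finite window w (everything to the left of the
    window is V, hence inert).  The window is padded on the right by enough
    V's that every basket and ball stays inside it. *)
Definition Tword (w : seq site) : seq site :=
  let w' := w ++ nseq (sumn (map sc w)).+2 V in
  let bc := basket_move 0 w' in
  let b' := map fst bc in
  let c := map snd bc in
  let c' := move_balls c (map S b') in
  [seq (x.1 + 1 - x.2, x.1, x.2) | x <- zip b' c'].

Definition Tinf_at (A : seq site) (p : int) : int -> site := at_ (Tword A) p.

Definition is_soliton (A : seq site) (v : nat) : Prop :=
  [/\ all wf_site A, head V A != V, last V A != V, 0 < v &
      forall p : int, Tinf_at A p =1 at_ A (p + v%:Z)%R].

Definition is_basic (A : seq site) (v : nat) : Prop :=
  is_soliton A v /\
  ~ (exists (A' A'' : seq site) (j v' v'' : nat),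
        [/\ A = A' ++ nseq j V ++ A'', v <= j, A' != [::] & A'' != [::]] /\
        is_soliton A' v' /\ is_soliton A'' v'').

Definition isB (s : site) : Prop := exists a, 0 < a /\ s = B a.
Definition isU (s : site) : Prop := exists a, 0 < a /\ s = U a.

Definition slow_word (A : seq site) : Prop :=
  [/\ A <> [::],
      (forall i, i < size A -> nth V A i = F \/ isB (nth V A i) \/ isU (nth V A i)) &
      (forall i, i.+1 < size A -> nth V A i = F ->
         ~ (nth V A i.+1 = F \/ isU (nth V A i.+1)))].

(* Main.v *)
Require Import Defs.
From mathcomp Require Import all_boot all_order all_algebra zify.


Fixpoint psum (f : nat -> nat) k := if k is k'.+1 then psum f k' + f k' else 0.

Lemma psum_mono f a b : a <= b -> psum f a <= psum f b.
Proof.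
elim: b => [|b IH]; first by rewrite leqn0 => /eqP ->.
rewrite leq_eqVlt => /orP [/eqP -> //| ]; rewrite ltnS => /IH /=; lia.
Qed.

Definition frs (orig cap : seq nat) k := nth 0 cap k - nth 0 orig k.
Definition PF orig cap k := psum (frs orig cap) k.
Fixpoint Kc (orig cap : seq nat) j := if j is j'.+1 then
  Kc orig cap j' - minn (Kc orig cap j') (frs orig cap j') + nth 0 orig j' else 0.
Definition dd orig cap j := minn (Kc orig cap j) (frs orig cap j).

Lemma find_eq (T : Type) (a : pred T) s x0 i : i < size s -> a (nth x0 s i) ->
  (forall i', i' < i -> ~~ a (nth x0 s i')) -> find a s = i.
Proof.
elim: s i => [|x s IH] [|i] //= Hs Ha Hb.
- by rewrite Ha.
- have := Hb 0 isT; rewrite /= => /negbTE ->; congr S; apply: IH => // i' Hi'.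
  exact: (Hb i'.+1).
Qed.

Lemma move_one_step orig cap j occ Y :
  size occ = size cap -> j < size cap ->
  Y < PF orig cap (size cap) - PF orig cap j.+1 ->
  (forall k, j < k < size cap -> nth 0 occ k = nth 0 orig k +
     (minn Y (PF orig cap k.+1 - PF orig cap j.+1) - minn Y (PF orig cap k - PF orig cap j.+1))) ->
  [/\ size (move_one cap j occ) = size cap,
      nth 0 (move_one cap j occ) j = (nth 0 occ j).-1,
      (forall k, k < j -> nth 0 (move_one cap j occ) k = nth 0 occ k) &
      (forall k, j < k < size cap -> nth 0 (move_one cap j occ) k = nth 0 orig k +
     (minn Y.+1 (PF orig cap k.+1 - PF orig cap j.+1) - minn Y.+1 (PF orig cap k - PF orig cap j.+1)))].
Proof.
move=> Hsz HjL HY Hocc.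
set P := PF orig cap in HY Hocc *.
set L := size cap in HjL HY Hocc *.
have PS k : P k.+1 = P k + frs orig cap k by [].
have Pm a b : a <= b -> P a <= P b by exact: psum_mono.
have HjL1 : j < L.-1.
  case: (ltnP j L.-1) => // H; have : L <= j.+1 by lia.
  move/Pm; lia.
have ex : exists k, (j < k) && (Y < P k.+1 - P j.+1).
  exists L.-1; rewrite HjL1 /=; have -> : L.-1.+1 = L by lia. done.
case: (ex_minnP ex) => k0 /andP [Hjk0 HYk0] Hmin.
have Hk0L : k0 < L.
  have : k0 <= L.-1.
    apply: Hmin; rewrite HjL1 /=; have -> : L.-1.+1 = L by lia. done.
  lia.
have HYk0' : P k0 - P j.+1 <= Y.
  case: (ltnP j.+1 k0) => H.
  - case: (leqP (P k0 - P j.+1) Y) => // H'.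
    have : k0 <= k0.-1.
      apply: Hmin; have -> : k0.-1.+1 = k0 by lia.
      rewrite H' andbT; lia.
    lia.
  - have -> : k0 = j.+1 by lia. by rewrite subnn.
have below k : j < k < k0 -> P k.+1 - P j.+1 <= Y.
  move=> /andP [H1 H2]; case: (leqP (P k.+1 - P j.+1) Y) => // H.
  have : k0 <= k by apply: Hmin; rewrite H1 H. lia.
have Hfind : find (fun k => nth 0 occ k < nth 0 cap k) (iota j.+1 (L - j.+1)) = k0 - j.+1.
  apply: find_eq.
  - rewrite size_iota; lia.
  - rewrite nth_iota; last by lia.
    have -> : j.+1 + (k0 - j.+1) = k0 by lia.
    rewrite Hocc ?Hjk0 //; have := PS k0; have := Pm j.+1 k0 ltac:(lia).
    rewrite /frs; lia.
  - move=> i' Hi'; rewrite nth_iota; last by lia.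
    set k := j.+1 + i'.
    have Hk : j < k < k0 by lia.
    rewrite Hocc; last by lia.
    have := below k Hk; have := PS k; have := Pm j.+1 k ltac:(lia).
    rewrite /frs; lia.
rewrite /move_one -/L Hfind.
have -> : j.+1 + (k0 - j.+1) = k0 by lia.
split.
- rewrite !size_set_nth; lia.
- by rewrite nth_set_nth /= eqxx.
- move=> k Hk; rewrite !nth_set_nth /=.
  have E1 : (k == j) = false by apply/negbTE; rewrite neq_ltn Hk.
  have E2 : (k == k0) = false by apply/negbTE; rewrite neq_ltn; apply/orP; left; lia.
  by rewrite E1 nth_set_nth /= E2.
- move=> k Hk; rewrite !nth_set_nth /=.
  have E1 : (k == j) = false by apply/negbTE; rewrite neq_ltn; apply/orP; right; lia.
  rewrite E1 nth_set_nth /=.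
  case: (ltngtP k k0) => H.
  + rewrite Hocc //. have := below k ltac:(lia). have := PS k.
    have := Pm j.+1 k ltac:(lia); lia.
  + rewrite Hocc //. have := Pm k0.+1 k ltac:(lia). have := Pm j.+1 k0 ltac:(lia). lia.
  + subst k; rewrite Hocc //. have := Pm j.+1 k0 ltac:(lia). lia.
Unshelve. all: exact 0. Qed.

Lemma arith1 X f Pj Pk Pk1 : Pj + f <= Pk -> Pk <= Pk1 ->
  minn X (Pk1 - Pj) - minn X (Pk - Pj) =
  minn (X - minn X f) (Pk1 - (Pj+f)) - minn (X - minn X f) (Pk - (Pj + f)).
Proof. move=> *; lia. Qed.

Definition InvO orig cap j occ :=
  [/\ size occ = size cap,
      (forall k, k < j -> nth 0 occ k = dd orig cap k) &
      (forall k, j <= k < size cap -> nth 0 occ k = nth 0 orig k +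
        (minn (Kc orig cap j) (PF orig cap k.+1 - PF orig cap j)
         - minn (Kc orig cap j) (PF orig cap k - PF orig cap j)))].

Lemma inner_iter orig cap j occ t :
  j < size cap -> InvO orig cap j occ -> t <= nth 0 orig j ->
  (0 < nth 0 orig j -> Kc orig cap j.+1 <= PF orig cap (size cap) - PF orig cap j.+1) ->
  let R := Kc orig cap j - dd orig cap j in
  let occ' := iter t (move_one cap j) occ in
  [/\ size occ' = size cap,
      (forall k, k < j -> nth 0 occ' k = dd orig cap k),
      nth 0 occ' j = nth 0 orig j + dd orig cap j - t &
      (forall k, j < k < size cap -> nth 0 occ' k = nth 0 orig k +
        (minn (R + t) (PF orig cap k.+1 - PF orig cap j.+1)
         - minn (R + t) (PF orig cap k - PF orig cap j.+1)))].
Proof.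
move=> HjL [Hsz Hlo Hhi] Ht Hroom R.
set P := PF orig cap in Hhi Hroom *.
have PS k : P k.+1 = P k + frs orig cap k by [].
have Pm a b : a <= b -> P a <= P b by exact: psum_mono.
have KS : Kc orig cap j.+1 = R + nth 0 orig j.
  by rewrite /R /dd.
elim: t Ht => [|t IH] Ht /=.
- split => //.
  + rewrite Hhi ?leqnn //= PS subnn /dd; lia.
  + move=> k Hk; rewrite Hhi; last by lia.
    rewrite addn0 /R /dd (PS j) (arith1 _ (frs orig cap j)) //;
      [rewrite -PS; apply: Pm; lia | apply: Pm; lia].
- have [Hs1 Hl1 Hj1 Hh1] := IH ltac:(lia).
  have [] := @move_one_step orig cap j _ (R + t) Hs1 HjL _ Hh1.
    have := Hroom ltac:(lia); rewrite KS /P; lia.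
  move=> S2 J2 L2 H2; split => //.
  + by move=> k Hk; rewrite L2 ?Hl1.
  + rewrite J2 Hj1; lia.
  + move=> k Hk; rewrite H2 //; rewrite addnS //.
Qed.

Lemma move_balls_spec orig cap : size orig = size cap ->
  (forall j, j < size cap -> 0 < nth 0 orig j ->
     Kc orig cap j.+1 <= PF orig cap (size cap) - PF orig cap j.+1) ->
  size (move_balls orig cap) = size cap /\
  forall k, k < size cap -> nth 0 (move_balls orig cap) k = dd orig cap k.
Proof.
move=> Hs Hroom.
have main j : j <= size cap -> InvO orig cap j
   (foldl (fun occ j => iter (nth 0 orig j) (move_one cap j) occ) orig (iota 0 j)).
  elim: j => [|j IH] Hj.
  - split => //= k Hk; rewrite /PF /=; lia.
  - rewrite -addn1 iotaD foldl_cat /= add0n.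
    have [S1 L1 J1 H1] := @inner_iter orig cap j _ (nth 0 orig j) ltac:(lia) (IH ltac:(lia)) (leqnn _)
      (Hroom j ltac:(lia)).
    split => //.
    + move=> k Hk; case: (ltngtP k j) => H; [by rewrite L1| lia|].
      subst k; rewrite J1; lia.
    + move=> k Hk; rewrite H1; last by lia.
      by rewrite addn1.
have [S1 L1 _] := main (size cap) (leqnn _).
by rewrite /move_balls Hs; split.
Qed.

Definition ee (s : site) := minn (sa s) (sb s).
Definition bnx (E : nat) (s : site) := sb s - ee s + E.
Definition dx (E K : nat) (s : site) := minn K ((bnx E s).+1 - sc s).
Definition outf (st : nat * nat) (s : site) : site :=
  (bnx st.1 s + 1 - dx st.1 st.2 s, bnx st.1 s, dx st.1 st.2 s).
Definition nxtf (st : nat * nat) (s : site) : nat * nat :=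
  (ee s, st.2 - dx st.1 st.2 s + sc s).
Fixpoint stf (s : nat -> site) (i : nat) : nat * nat :=
  if i is i'.+1 then nxtf (stf s i') (s i') else (0, 0).
Definition Tf s i := outf (stf s i) (s i).

Lemma stf1 s i : (stf s i).1 = if i is i'.+1 then ee (s i') else 0.
Proof. by case: i. Qed.

Lemma bm_size p w : size (basket_move p w) = size w.
Proof. by elim: w p => [|x w IH] p //=; rewrite IH. Qed.

Lemma bm_nth p w i : i < size w -> nth (0,0) (basket_move p w) i =
  (bnx (if i is i'.+1 then ee (nth V w i') else p) (nth V w i), sc (nth V w i)).
Proof.
elim: w p i => [|x w IH] p [|i] //= Hi.
rewrite IH //; by case: i Hi.
Qed.

Lemma psum_ext f g k : (forall i, i < k -> f i = g i) -> psum f k = psum g k.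
Proof.
elim: k => [|k IH] H //=; rewrite IH ?H // => i Hi; apply: H; lia.
Qed.

Lemma psum_sumn (f : site -> nat) l : psum (fun i => f (nth V l i)) (size l) = sumn (map f l).
Proof.
elim/last_ind: l => [|l x IH] //.
rewrite size_rcons /= map_rcons sumn_rcons nth_rcons ltnn eqxx.
rewrite -IH; congr (_ + _); apply: psum_ext => i Hi; by rewrite nth_rcons Hi.
Qed.

Lemma psum_lb f a b : a <= b -> (forall k, a <= k < b -> 0 < f k) -> b - a <= psum f b - psum f a.
Proof.
elim: b => [|b IH] Hab H; first by lia.
case: (ltngtP a b.+1) => Hc; [|lia|].
- have := IH ltac:(lia) (fun k Hk => H k ltac:(lia)); have := H b ltac:(lia).
  have := @psum_mono f a b ltac:(lia). simpl. lia.
- subst a; lia.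
Qed.

Lemma Kc_le orig cap j : Kc orig cap j <= psum (nth 0 orig) j.
Proof. elim: j => [|j IH] //=; lia. Qed.

Lemma stf2_le s k : (stf s k).2 <= psum (fun i => sc (s i)) k.
Proof. elim: k => [|k IH] //=; rewrite /nxtf /=; lia. Qed.

Lemma nth_pad (A : seq site) M i : nth V (A ++ nseq M V) i = nth V A i.
Proof.
rewrite nth_cat; case: ltnP => // H; rewrite nth_nseq (nth_default _ H); by case: ifP.
Qed.

Lemma Tf_tail (A : seq site) i : size A + (sumn (map sc A)).+2 <= i -> Tf (nth V A) i = V.
Proof.
set s := nth V A; set n := size A; set N := sumn (map sc A) => Hi.
have HN : psum (fun i => sc (s i)) n = N by rewrite /s /n psum_sumn.
have sV k : n <= k -> s k = V by move=> Hk; rewrite /s nth_default.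
have Kt t : (stf s (n + t)).2 <= N - t.
  elim: t => [|t IH]; first by rewrite addn0 -HN subn0 stf2_le.
  rewrite addnS /= /nxtf /= sV ?leq_addr // /dx /=. move: IH.
  set K := (stf s (n + t)).2; set E := (stf s (n+t)).1. rewrite /bnx /ee /=. lia.
have K0 : (stf s i).2 = 0.
  have := Kt (i - n); have -> : n + (i - n) = i by lia. lia.
have E0 : (stf s i).1 = 0.
  rewrite stf1; case: i Hi {K0} => [|i] Hi; first by lia.
  by rewrite sV //; lia.
rewrite /Tf /outf /dx /bnx E0 K0 sV; last by lia.
done.
Qed.

Lemma Tword_nth (A : seq site) i : nth V (Tword A) i = Tf (nth V A) i.
Proof.
set s := nth V A; set n := size A; set N := sumn (map sc A).
rewrite /Tword -/N.
set w := A ++ nseq N.+2 V.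
have Hw k : nth V w k = s k by rewrite /w nth_pad.
set bc := basket_move 0 w.
set b' := map fst bc; set c := map snd bc; set cap := map S b'.
have HL : size w = n + N.+2 by rewrite /w size_cat size_nseq.
have Sbc : size bc = size w by rewrite bm_size.
have Sb : size b' = size w by rewrite size_map.
have Sc : size c = size w by rewrite size_map.
have Scap : size cap = size w by rewrite size_map.
have Hb k : k < size w -> nth 0 b' k = bnx (stf s k).1 (s k).
  move=> Hk; rewrite /b' (nth_map (0,0)) ?Sbc // /bc bm_nth // stf1 !Hw.
  by case: k Hk => [|k] Hk; rewrite ?Hw.
have Hc k : k < size w -> nth 0 c k = sc (s k).
  by move=> Hk; rewrite /c (nth_map (0,0)) ?Sbc // /bc bm_nth // Hw.
have Hcap k : k < size w -> nth 0 cap k = (bnx (stf s k).1 (s k)).+1.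
  by move=> Hk; rewrite /cap (nth_map 0) ?Sb // Hb.
have HK k : k <= size w -> Kc c cap k = (stf s k).2.
  elim: k => [|k IH] Hk //=.
  rewrite IH; last by lia.
  by rewrite /nxtf /dx /frs Hcap ?Hc //; lia.
have Hroom j : j < size cap -> 0 < nth 0 c j ->
     Kc c cap j.+1 <= PF c cap (size cap) - PF c cap j.+1.
  rewrite Scap => Hj; rewrite Hc // => Hpos.
  have Hjn : j < n.
    case: (ltnP j n) => // H; move: Hpos; by rewrite /s nth_default.
  have := Kc_le c cap j.+1.
  have -> : psum (nth 0 c) j.+1 = psum (fun i => sc (s i)) j.+1.
    apply: psum_ext => i0 Hi0; rewrite Hc //; lia.
  have := @psum_mono (fun i => sc (s i)) j.+1 n Hjn.
  have -> : psum (fun i => sc (s i)) n = N by rewrite /s /n psum_sumn.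
  have := @psum_lb (frs c cap) n (size cap) ltac:(lia).
  have := @psum_mono (frs c cap) j.+1 n Hjn.
  rewrite /PF Scap => H1 H2.
  have : size w - n <= psum (frs c cap) (size w) - psum (frs c cap) n.
    apply: H2 => k Hk; rewrite /frs Hcap ?Hc; try lia.
    rewrite /s nth_default; last by lia.
    rewrite /=; lia.
  lia.
have [Sm Hm] := @move_balls_spec c cap (esym (etrans Scap (esym Sc))) Hroom.
case: (ltnP i (size w)) => Hi.
- rewrite (nth_map (0,0)); last by rewrite size_zip Sb Sm Scap minnn.
  rewrite nth_zip /=; last by rewrite Sb Sm Scap.
  rewrite Hm ?Scap // Hb // /dd HK; last by lia.
  rewrite /frs Hcap // Hc // /Tf /outf /dx.
- rewrite nth_default; last by rewrite size_map size_zip Sb Sm Scap minnn.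
  rewrite Tf_tail //; lia.
Qed.

Lemma at_nat (X : seq site) (p i : int) :
  at_ X p i = if (p <= i)%R then nth V X (absz (i - p)%R) else V.
Proof.
rewrite /at_; case: (boolP (p <= i)%R) => H //=.
case: (boolP (i < p + (size X)%:Z)%R) => H2 //.
rewrite nth_default //; lia.
Qed.

Lemma nth_shift (A : seq site) v m :
  nth V (nseq v V ++ A) m = if m < v then V else nth V A (m - v).
Proof. rewrite nth_cat size_nseq; case: ltnP => H //; by rewrite nth_nseq H. Qed.

Lemma soliton_iff A v : is_soliton A v <->
  [/\ all wf_site A, head V A != V, last V A != V, 0 < v &
      forall m, Tf (nth V A) m = nth V (nseq v V ++ A) m].
Proof.
split.
- case=> H1 H2 H3 H4 H5; split => // m.
  have := H5 0%R (Posz m); rewrite /Tinf_at !at_nat.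
  rewrite nth_shift -Tword_nth.
  have -> : (0 <= (Posz m))%R = true by lia.
  have -> : absz ((Posz m) - 0)%R = m by lia.
  case: (ltnP m v) => Hm.
  + have -> : ((0 + (Posz v)) <= (Posz m))%R = false by lia. done.
  + have -> : ((0 + (Posz v)) <= (Posz m))%R = true by lia.
    have -> : absz ((Posz m) - (0 + (Posz v)))%R = (m - v)%N by lia. done.
- case=> H1 H2 H3 H4 H5; split => // p i.
  rewrite /Tinf_at !at_nat.
  case: (boolP (p <= i)%R) => Hpi.
  + rewrite Tword_nth H5 nth_shift.
    case: (ltnP (absz (i - p)%R) v) => Hm.
    * have -> : ((p + (Posz v)) <= i)%R = false by lia. done.
    * have -> : ((p + (Posz v)) <= i)%R = true by lia.
      have -> : absz (i - (p + (Posz v)))%R = (absz (i - p)%R - v)%N by lia. done.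
  + have -> : ((p + (Posz v)) <= i)%R = false by lia. done.
Qed.

Definition SOL (s : nat -> site) v := forall m, Tf s m = (if m < v then V else s (m - v)).

Lemma sol_b s v : SOL s v -> forall m,
  bnx (stf s m).1 (s m) = (if m < v then 0 else sb (s (m - v))).
Proof. move=> H m; have := congr1 sb (H m); rewrite /Tf /outf /=; by case: ifP. Qed.

Lemma sol_c s v : SOL s v -> forall m,
  dx (stf s m).1 (stf s m).2 (s m) = (if m < v then 0 else sc (s (m - v))).
Proof. move=> H m; have := congr1 sc (H m); rewrite /Tf /outf /=; by case: ifP. Qed.

Lemma eb_pref s v : 0 < v -> SOL s v -> forall m,
  ee (s m) + psum (fun i => sb (s i)) (m.+1 - v) = psum (fun i => sb (s i)) m.+1.
Proof.
move=> Hv H; have Hb := @sol_b s v H.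
have Hle k : ee (s k) <= sb (s k) by rewrite /ee; lia.
elim=> [|m IH].
- have := Hb 0; rewrite stf1 Hv /bnx /=. have := Hle 0.
  have -> : 1 - v = 0 by lia. simpl; lia.
- have := Hb m.+1; rewrite stf1 /bnx. have := Hle m.+1. move: IH.
  case: (ltnP m.+1 v) => Hm.
  + have -> : m.+2 - v = 0 by lia. have -> : m.+1 - v = 0 by lia. simpl; lia.
  + have -> : m.+2 - v = (m.+1 - v).+1 by lia. simpl. lia.
Qed.

Lemma eb_all s v : 0 < v -> SOL s v -> forall m, ee (s m) = sb (s m).
Proof.
move=> Hv H m; have := @eb_pref s v Hv H m.
have := @psum_mono (fun i => sb (s i)) (m.+1 - v) m ltac:(lia).
have Hle : ee (s m) <= sb (s m) by rewrite /ee; lia.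
simpl; lia.
Qed.

Lemma wf_tri (x : site) : wf_site x -> x = (sb x + 1 - sc x, sb x, sc x).
Proof. case: x => [[a b] c]; rewrite /wf_site /sa /sb /sc /= => /eqP H; f_equal; f_equal; lia. Qed.

Lemma c_le1 (x : site) : wf_site x -> ee x = sb x -> sc x <= 1.
Proof. case: x => [[a b] c]; rewrite /wf_site /ee /sa /sb /sc /= => /eqP; lia. Qed.

Lemma stf_shift s m0 : stf s m0 = (0,0) -> forall i, stf s (m0 + i) = stf (fun k => s (m0 + k)) i.
Proof. move=> H; elim=> [|i IH]; first by rewrite addn0. by rewrite addnS /= IH. Qed.

Lemma Tf_shift s m0 : stf s m0 = (0,0) -> forall i, Tf s (m0 + i) = Tf (fun k => s (m0 + k)) i.
Proof. by move=> H i; rewrite /Tf stf_shift. Qed.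
Set Implicit Arguments.

Lemma fast_SOL k : 0 < k -> SOL (nth V (nseq k F)) k.
Proof.
move=> Hk.
set s := nth V (nseq k F).
have Hs m : s m = if m < k then F else V by rewrite /s nth_nseq.
have St m : stf s m = (0, minn m (k + k - m)).
  elim: m => [|m IH] /=; first by rewrite min0n.
  rewrite IH /nxtf /dx /bnx /= Hs.
  case: (ltnP m k) => H; rewrite /ee /sa /sb /sc /=; f_equal; lia.
move=> m; rewrite /Tf St Hs /outf /dx /bnx /=.
case: (ltnP m k) => H; rewrite /ee /sa /sb /sc /=.
- rewrite /V; congr (_, _, _); lia.
- rewrite Hs; case: (ltnP (m - k) k) => H2.
  + rewrite /F; congr (_, _, _); lia.
  + rewrite /V; congr (_, _, _); lia.
Qed.

Definition LT (x : site) := x = V \/ x = F \/ isB x \/ isU x.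

Lemma LT_facts x : LT x -> [/\ wf_site x, ee x = sb x & sc x <= 1].
Proof.
case=> [->|[->|[[a [Ha ->]]|[a [Ha ->]]]]]; rewrite /wf_site /ee /sa /sb /sc /=;
  split => //; try lia; apply/eqP; lia.
Qed.

Lemma LT_F x : LT x -> sb x = 0 -> sc x = 1 -> x = F.
Proof. by case=> [->|[->|[[a [Ha ->]]|[a [Ha ->]]]]]; rewrite /sb /sc /=; try lia. Qed.

Lemma LT_c0 x : LT x -> ~ (x = F \/ isU x) -> sc x = 0.
Proof.
case=> [->|[->|[[a [Ha ->]]|[a [Ha ->]]]]] H //.
- by exfalso; apply: H; left.
- by exfalso; apply: H; right; exists a.
Qed.

Lemma slow_SOL s : (forall i, LT (s i)) ->
  (forall i, s i = F -> ~ (s i.+1 = F \/ isU (s i.+1))) -> SOL s 1.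
Proof.
move=> HL HF.
have key m : (if m is m'.+1 then sc (s m') else 0) <=
    (if m is m'.+1 then sb (s m') else 0) + 1 - sc (s m).
  case: m => [|m] /=; first by have [_ _] := LT_facts (HL 0); lia.
  have [_ _ H1] := LT_facts (HL m); have [_ _ H2] := LT_facts (HL m.+1).
  case: (posnP (sb (s m))) => Hb; last by lia.
  case: (posnP (sc (s m))) => Hc; first by lia.
  have Hsc : sc (s m) = 1 by lia.
  have HsF := LT_F (HL m) Hb Hsc.
  have := LT_c0 (HL m.+1) (HF m HsF); lia.
have St m : stf s m = (if m is m'.+1 then sb (s m') else 0, if m is m'.+1 then sc (s m') else 0).
  elim: m => [|m IH] //.
  rewrite /= IH /nxtf /dx /bnx /=.
  have [_ He _] := LT_facts (HL m). rewrite He subnn add0n.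
  have := key m; simpl.
  set K := (if m is m'.+1 then sc (s m') else 0).
  set E := (if m is m'.+1 then sb (s m') else 0).
  move=> Hk; f_equal; lia.
move=> m; rewrite /Tf St /outf /dx /bnx /=.
have [_ He _] := LT_facts (HL m). rewrite He subnn add0n.
have := key m. clear He.
case: m => [|m] /=; first by move=> _; rewrite /V; f_equal; f_equal; lia.
move=> Hk; rewrite subn1 /=.
have -> : minn (sc (s m)) ((sb (s m)).+1 - sc (s m.+1)) = sc (s m) by lia.
have [W _ _] := LT_facts (HL m).
by rewrite [in RHS](@wf_tri (s m) W).
Qed.
Set Implicit Arguments.

Lemma stf_ext s s' : s =1 s' -> stf s =1 stf s'.
Proof. move=> H; elim=> [|i IH] //=; by rewrite IH H. Qed.

Lemma Tf_ext s s' : s =1 s' -> Tf s =1 Tf s'.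
Proof. move=> H i; by rewrite /Tf (stf_ext H) H. Qed.

Lemma wfV : wf_site V. Proof. by []. Qed.

Lemma wf_nth A i : all wf_site A -> wf_site (nth V A i).
Proof.
move=> H; case: (ltnP i (size A)) => Hi; last by rewrite nth_default.
by apply: (all_nthP V H).
Qed.

Lemma LT_of x : wf_site x -> ee x = sb x -> LT x.
Proof.
move=> W He; have Hc := @c_le1 x W He; rewrite (@wf_tri x W).
case: (posnP (sb x)) => Hb; case: (posnP (sc x)) => Hc0.
- left; rewrite Hb Hc0 /V; done.
- right; left; have -> : sc x = 1 by lia. by rewrite Hb /F.
- right; right; left; exists (sb x); split => //; rewrite Hc0 /B; congr (_,_,_); lia.
- right; right; right; exists (sb x); split => //; have -> : sc x = 1 by lia.
  rewrite /U; congr (_,_,_); lia.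
Qed.

Lemma LT_notV x : x = F \/ isB x \/ isU x -> x != V.
Proof.
case=> [->|[[a [Ha ->]]|[a [Ha ->]]]] //; apply/eqP; rewrite /B /U /V => [[]]; lia.
Qed.

Lemma isU_notV : ~ isU V.
Proof. by case=> a [_ []]. Qed.

Lemma fast_soliton k : 0 < k -> is_soliton (nseq k F) k.
Proof.
move=> Hk; apply/soliton_iff; split => //.
- by apply/allP => x; rewrite mem_nseq => /andP [_ /eqP ->].
- by case: k Hk.
- rewrite -nth_last nth_nseq size_nseq; case: k Hk => // k _; by rewrite /= ltnSn.
- by move=> m; rewrite nth_shift (@fast_SOL k Hk).
Qed.

Lemma slow_soliton A : A <> [::] -> (forall i, i < size A -> LT (nth V A i) /\ nth V A i != V) ->
  (forall i, i.+1 < size A -> nth V A i = F -> ~ (nth V A i.+1 = F \/ isU (nth V A i.+1))) ->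
  is_soliton A 1.
Proof.
move=> Hne HL HF.
have HL' i : LT (nth V A i).
  case: (ltnP i (size A)) => Hi; first by case: (HL i Hi).
  by rewrite nth_default //; left.
have HF' i : nth V A i = F -> ~ (nth V A i.+1 = F \/ isU (nth V A i.+1)).
  move=> H; case: (ltnP i.+1 (size A)) => Hi; first exact: HF.
  rewrite (nth_default _ Hi) => [[//|]]; exact: isU_notV.
have Hsz : 0 < size A by rewrite lt0n; apply/eqP => /size0nil.
apply/soliton_iff; split => //.
- apply/(all_nthP V) => i Hi; by case: (LT_facts (HL' i)).
- by rewrite -nth0; case: (HL 0 Hsz).
- by rewrite -nth_last; case: (HL (size A).-1 ltac:(lia)).
- move=> m; rewrite nth_shift (@slow_SOL (nth V A) HL' HF') /=.
  by case: m.
Qed.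
Set Implicit Arguments.

Definition SPLIT A v := exists (A' A'' : seq site) (j : nat),
  [/\ A = A' ++ nseq j V ++ A'', v <= j, A' != [::] & A'' != [::]] /\
  is_soliton A' v /\ is_soliton A'' v.

Lemma drop_soliton A v m0 :
  all wf_site A -> last V A != V -> 0 < v -> m0 < size A -> nth V A m0 != V ->
  stf (nth V A) m0 = (0,0) -> v <= m0 ->
  (forall k, m0 - v <= k < m0 -> nth V A k = V) ->
  SOL (nth V A) v -> is_soliton (drop m0 A) v.
Proof.
move=> Hwf Hl Hv Hm0 Hm0V Hst Hvm0 HV HS.
apply/soliton_iff; split => //.
- apply/(all_nthP V) => i Hi; rewrite nth_drop; exact: wf_nth.
- by rewrite -nth0 nth_drop addn0.
- rewrite -nth_last nth_drop size_drop.
  have -> : m0 + (size A - m0).-1 = (size A).-1 by lia.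
  by rewrite nth_last.
- move=> m; rewrite nth_shift.
  rewrite (@Tf_ext _ (fun k => nth V A (m0 + k))); last by move=> k; rewrite nth_drop.
  rewrite -(@Tf_shift (nth V A) m0 Hst) HS.
  have -> : (m0 + m < v) = false by lia.
  case: (ltnP m v) => Hm.
  + apply: HV; lia.
  + rewrite nth_drop; congr nth; lia.
Qed.

Lemma fast_case A v : is_soliton A v -> 2 <= v -> A = nseq v F \/ SPLIT A v.
Proof.
move=> Hsol Hv2.
have [Hwf Hh Hl Hv HT] := (soliton_iff A v).1 Hsol.
set s := nth V A.
have HS : SOL s v by move=> m; rewrite /s HT nth_shift.
have He := @eb_all s v Hv HS.
have W m : wf_site (s m) := @wf_nth A m Hwf.
have Hb0 : forall m, sb (s m) = 0.
  elim/ltn_ind => m IH.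
  have := @sol_b s v HS m.+1; rewrite stf1 /bnx He subnn add0n He.
  case: ltnP => H //; move=> ->; apply: IH; lia.
have HLT m : LT (s m) := @LT_of (s m) (W m) (He m).
have Hc1 m : sc (s m) <= 1 by case: (LT_facts (HLT m)).
have HsF m : sc (s m) = 1 -> s m = F := LT_F (HLT m) (Hb0 m).
have HsV m : sc (s m) = 0 -> s m = V.
  move=> H; rewrite (@wf_tri (s m) (W m)) Hb0 H; done.
have HE m : (stf s m).1 = 0 by rewrite stf1; case: m => [|m] //; rewrite He Hb0.
have Hdx m : dx (stf s m).1 (stf s m).2 (s m) = minn (stf s m).2 (1 - sc (s m)).
  by rewrite /dx /bnx HE He Hb0.
have HK m : (stf s m.+1).2 = (stf s m).2 - minn (stf s m).2 (1 - sc (s m)) + sc (s m).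
  by rewrite -Hdx.
have HC m : minn (stf s m).2 (1 - sc (s m)) = if m < v then 0 else sc (s (m - v)).
  by rewrite -Hdx (@sol_c s v HS).
have C1 : forall m, m <= v -> (stf s m).2 = m /\ forall i, i < m -> sc (s i) = 1.
  elim=> [|m IH] Hm; first by split.
  have [IK IC] := IH (ltnW Hm).
  have Hcm : sc (s m) = 1.
    case: (posnP m) => Hm0.
    - subst m; have := Hc1 0; case: (posnP (sc (s 0))) => H0; last by lia.
      by move: Hh; rewrite -nth0 -/s (HsV 0 H0) eqxx.
    - have := HC m; rewrite IK Hm; have := Hc1 m; lia.
  split; first by rewrite HK IK Hcm; lia.
  move=> i Hi; case: (ltngtP i m) => H; [exact: IC| lia| by subst].
have [CK CC] := C1 v (leqnn v).
have C2 : forall t, t <= v -> (stf s (v + t)).2 = v - t /\ forall i, i < t -> sc (s (v + i)) = 0.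
  elim=> [|t IH] Ht; first by rewrite addn0 CK subn0; split.
  have [IK IC] := IH (ltnW Ht).
  have Hct : sc (s (v + t)) = 0.
    have := HC (v + t); rewrite IK.
    have -> : (v + t < v) = false by lia.
    have -> : v + t - v = t by lia.
    rewrite (CC t); last by lia. have := Hc1 (v + t); lia.
  split; first by rewrite addnS HK IK Hct; lia.
  move=> i Hi; case: (ltngtP i t) => H; [exact: IC| lia| by subst].
set n := size A.
have Hnv : v <= n.
  case: (ltnP n v) => // H; exfalso.
  have := HsF v.-1 (CC v.-1 ltac:(lia)); rewrite /s nth_default; [by []|lia].
case: (eqVneq n v) => Hnv'.
- left; apply: (@eq_from_nth _ V); first by rewrite size_nseq.
  move=> i Hi; rewrite nth_nseq; have Hi' : i < v by lia.
  by rewrite Hi' -/s HsF // CC.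
- right.
  have Hlast : s n.-1 != V by rewrite /s nth_last.
  have HsVv i : v <= i < v + v -> s i = V.
    move=> Hi; apply: HsV; have [_ C] := C2 v (leqnn v).
    have -> : i = v + (i - v) by lia. apply: C; lia.
  have Hn2 : v + v <= n.-1.
    case: (ltnP n.-1 (v + v)) => // H; exfalso; move: Hlast; rewrite HsVv ?eqxx //; lia.
  have exm : exists k, (v <= k) && (s k != V) by exists n.-1; rewrite Hlast andbT; lia.
  case: (ex_minnP exm) => m0 /andP [Hvm0 Hm0V] Hmin.
  have Hm0n : m0 <= n.-1 by apply: Hmin; rewrite Hlast andbT; lia.
  have Hm02 : v + v <= m0.
    case: (ltnP m0 (v + v)) => // H; exfalso; move: Hm0V; rewrite HsVv ?eqxx //; lia.
  have HmV k : v <= k < m0 -> s k = V.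
    move=> Hk; apply/eqP; apply: contraTT Hk => Hk; have := Hmin k; rewrite Hk andbT.
    case: (ltnP k v) => //= H1 H2; have := H2 isT; lia.
  have C3 : forall t, v + v + t <= m0 -> (stf s (v + v + t)).2 = 0.
    elim=> [|t IH] Ht.
    - rewrite addn0; have [K _] := C2 v (leqnn v); by rewrite K subnn.
    - rewrite addnS HK IH; last by lia.
      have -> : sc (s (v + v + t)) = 0 by rewrite HmV //; lia.
      by [].
  have Hst : stf s m0 = (0,0).
    rewrite [stf s m0]surjective_pairing HE.
    have := C3 (m0 - (v + v)) ltac:(lia); have -> : v + v + (m0 - (v + v)) = m0 by lia.
    by move=> ->.
  exists (nseq v F), (drop m0 A), (m0 - v); split; [split|split].
  + apply: (@eq_from_nth _ V).
      rewrite !size_cat !size_nseq size_drop -/n; lia.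
    move=> i Hi; rewrite nth_cat size_nseq nth_nseq.
    case: (ltnP i v) => H1.
    * by rewrite -/s HsF // CC.
    * rewrite nth_cat size_nseq nth_nseq.
      case: (ltnP (i - v) (m0 - v)) => H2.
      - rewrite -/s HmV //; lia.
      - rewrite nth_drop; congr nth; lia.
  + lia.
  + by rewrite -size_eq0 size_nseq; lia.
  + by rewrite -size_eq0 size_drop -/n; lia.
  + by apply: fast_soliton.
  + apply: drop_soliton => //; try lia.
    * move=> k Hk; rewrite -/s HmV //; lia.
Qed.
Set Implicit Arguments.

Lemma slow_case A : is_soliton A 1 -> slow_word A \/ SPLIT A 1.
Proof.
move=> Hsol.
have [Hwf Hh Hl Hv HT] := (soliton_iff A 1).1 Hsol.
set s := nth V A.
have HS : SOL s 1 by move=> m; rewrite /s HT nth_shift.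
have He := @eb_all s 1 Hv HS.
have W m : wf_site (s m) := @wf_nth A m Hwf.
have HLT m : LT (s m) := @LT_of (s m) (W m) (He m).
have HE m : (stf s m).1 = if m is m'.+1 then sb (s m') else 0.
  by rewrite stf1; case: m => [|m] //; rewrite He.
have HK : forall m, (stf s m).2 = if m is m'.+1 then sc (s m') else 0.
  elim=> [|m IH] //.
  have := @sol_c s 1 HS m; rewrite /= /nxtf /= IH.
  case: m IH => [|m] IH /=; first by move=> ->.
  rewrite subn1 /= => ->; lia.
have NoFF i : s i = F -> ~ (s i.+1 = F \/ isU (s i.+1)).
  move=> HF HU.
  have Hc1 : sc (s i.+1) = 1.
    case: HU => [->|[a [_ ->]]] //.
  have := @sol_c s 1 HS i.+1; rewrite /dx /bnx He subnn add0n HE HK HF Hc1 /=.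
  have -> : i.+1 - 1 = i by lia. rewrite HF /sb /sc /=; lia.
set n := size A.
case: (boolP (V \in A)) => HVA.
- right.
  have exm : exists k, s k == V by exists (index V A); rewrite /s nth_index.
  case: (ex_minnP exm) => m0 /eqP Hm0V Hmin0.
  have Hm0n : m0 < n.
    have := Hmin0 (index V A); rewrite /s nth_index // eqxx => /(_ isT).
    move=> H; rewrite -index_mem -/n in HVA; lia.
  have Hm0A : m0 <= size A by rewrite -/n; lia.
  have Hm0pos : 0 < m0.
    case: (posnP m0) => // H; move: Hh; by rewrite -nth0 -/s -H Hm0V eqxx.
  have Hlast : s n.-1 != V by rewrite /s nth_last.
  have exm1 : exists k, (m0 <= k) && (s k != V) by exists n.-1; rewrite Hlast andbT; lia.
  case: (ex_minnP exm1) => m1 /andP [Hm01 Hm1V] Hmin1.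
  have Hm1n : m1 <= n.-1 by apply: Hmin1; rewrite Hlast andbT; lia.
  have Hm01' : m0 < m1 by case: (ltngtP m0 m1) Hm01 => // H _; move: Hm1V; rewrite -H Hm0V eqxx.
  have HmV k : m0 <= k < m1 -> s k = V.
    move=> Hk; apply/eqP; apply: contraTT Hk => Hk; have := Hmin1 k; rewrite Hk andbT.
    case: (ltnP k m0) => //= H1 H2; have := H2 isT; lia.
  have Hst : stf s m1 = (0,0).
    rewrite [stf s m1]surjective_pairing HE HK.
    case: m1 Hm01' HmV {Hmin1 Hm1V Hm1n Hm01} => [|m1] // H HmV.
    by rewrite HmV //; lia.
  have Hlt k : k < m0 -> s k != V.
    move=> Hk; apply/negP => /eqP H; have := Hmin0 k; rewrite H eqxx => /(_ isT); lia.
  exists (take m0 A), (drop m1 A), (m1 - m0); split; [split|split].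
  + apply: (@eq_from_nth _ V).
      rewrite !size_cat size_nseq size_drop size_takel // -/n; lia.
    move=> i Hi; rewrite nth_cat size_takel //.
    case: (ltnP i m0) => H1.
    * by rewrite nth_take.
    * rewrite nth_cat size_nseq nth_nseq.
      case: (ltnP (i - m0) (m1 - m0)) => H2.
      - rewrite -/s HmV //; lia.
      - rewrite nth_drop; congr nth; lia.
  + lia.
  + rewrite -size_eq0 size_takel //; lia.
  + by rewrite -size_eq0 size_drop -/n; lia.
  + apply: slow_soliton.
    * by apply/eqP; rewrite -size_eq0 size_takel //; lia.
    * move=> i; rewrite size_takel //.
      move=> Hi; rewrite nth_take //; split; [exact: HLT| exact: Hlt].
    * move=> i; rewrite size_takel //.
      move=> Hi; rewrite !nth_take //; [exact: NoFF| lia].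
  + apply: drop_soliton => //; try lia.
    * move=> k Hk; rewrite -/s HmV //; lia.
- left; split.
  + by move=> H; move: Hh; rewrite H.
  + move=> i Hi; have : s i != V.
      apply/negP => /eqP H; move: HVA; rewrite -H mem_nth //.
    case: (HLT i) => [->|H]; first by rewrite eqxx.
    by move=> _; exact: H.
  + move=> i _; exact: NoFF.
Qed.

Theorem mainTheorem5 (A : seq site) (v : nat) :
  is_basic A v <->
  ((exists k : nat, 0 < k /\ A = nseq k F /\ v = k) \/ (slow_word A /\ v = 1)).
Proof.
split.
- case=> Hsol Hnot.
  have Hv : 0 < v by case: Hsol.
  have contra : ~ SPLIT A v.
    case=> [A' [A'' [j [H1 [H2 H3]]]]]; apply: Hnot.
    by exists A', A'', j, v, v.
  case: (ltngtP v 1) => H; first by lia.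
  + case: (fast_case Hsol H) => // ->; left; exists v; split => //.
  + subst v; case: (slow_case Hsol) => // Hsw; right; split => //.
- have nosplit A0 v0 : 0 < v0 -> V \notin A0 -> ~ (exists (A' A'' : seq site) (j v' v'' : nat),
        [/\ A0 = A' ++ nseq j V ++ A'', v0 <= j, A' != [::] & A'' != [::]] /\
        is_soliton A' v' /\ is_soliton A'' v'').
    move=> Hv0 HV [A' [A'' [j [v' [v'' [[H1 H2 _ _] _]]]]]].
    move: HV; rewrite H1 !mem_cat mem_nseq eqxx andbT.
    have -> : 0 < j by lia. by rewrite orbT.
  case=> [[k [Hk [-> ->]]]|[Hsw ->]].
  + split; first exact: fast_soliton.
    apply: nosplit => //; rewrite mem_nseq; apply/negP => /andP [_ /eqP H]; by case: H.
  + case: Hsw => Hne Hlet Hnff.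
    have HL i : i < size A -> LT (nth V A i) /\ nth V A i != V.
      move=> Hi; split; [by right; apply: Hlet | apply: LT_notV; exact: Hlet].
    split; first exact: slow_soliton.
    apply: nosplit => //; apply/negP => HVA.
    have := HL (index V A); rewrite index_mem HVA nth_index // => /(_ isT) [_].
    by rewrite eqxx.
Qed.
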